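(* Let $C_n=\frac{1}{n+1}\binom{2n}{n}$ ($n\ge0$) be the Catalan numbers. Then for every $n\ge0$, $$C_{n+1}=\sum_{h=0}^n\binom{n}{h}(-1)^h4^{n-h}C_{h+1};$$ that is, $L^{(-1,4)}(\sigma(C))=\sigma(C)$.
   Context: $\sigma$ is the shift operator: $\sigma((a_0,a_1,a_2,\ldots))=(a_1,a_2,\ldots)$. For $h,y$, $L^{(h,y)}(a)$ is the sequence with $n$-th term $\sum_{i=0}^n\binom{n}{i}h^iy^{n-i}a_i$. *)

(* Defs.v *)
From mathcomp Require Import all_boot all_order all_algebra.
Set Implicit Arguments. Unset Strict Implicit. Unset Printing Implicit Defensive.
Import GRing.Theory.
Local Open Scope ring_scope.

(* Catalan numbers C_n = binom(2n,n)/(n+1) (exact division in nat). *)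
Definition catalan (n : nat) : nat := ('C(n.*2, n) %/ n.+1)%N.

Definition shift (R : Type) (a : nat -> R) : nat -> R := fun n => a n.+1.

Definition Ltrans (R : comRingType) (h y : R) (a : nat -> R) : nat -> R :=
  fun n => \sum_(0 <= i < n.+1) ('C(n, i))%:R * h ^+ i * y ^+ (n - i) * a i.

Definition catalan_seq : nat -> int := fun n => (catalan n)%:R.

(* Main.v *)
Require Import Defs.
From mathcomp Require Import all_boot all_order all_algebra zify ring.

Lemma catalanE n : (catalan n * n.+1 = 'C(n.*2, n))%N.
Proof.
have h := mul_bin_left n.*2 n.
have e : (n.*2 - n = n)%N by rewrite -addnn addnK.
rewrite e in h.
have e2 : 'C(n.*2, n) = ('C(n.*2, n) - 'C(n.*2, n.+1)) * n.+1 by nia.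
by rewrite /catalan e2 mulnK // -e2.
Qed.

Lemma catalan_rec n : (catalan n.+1 * n.+2 = 2 * (n.*2.+1) * catalan n)%N.
Proof.
have h1 := mul_bin_diag n.*2.+2 n.
have h2 := mul_bin_diag n.*2.+1 n.
have h3 : 'C(n.*2.+1, n.+1) = 'C(n.*2.+1, n).
  rewrite -bin_sub; last by lia.
  by congr binomial; lia.
have c0 := catalanE n. have c1 := catalanE n.+1.
rewrite doubleS in c1.
simpl in h1, h2.
apply/eqP; rewrite -(eqn_pmul2l (_ : 0 < n.+1 * n.+1)%N) //.
apply/eqP.
have: (n.+1 * (n.+1 * 'C(n.*2.+2, n.+1)) = n.+1 * ((n.*2.+2) * 'C(n.*2.+1, n)))%N by rewrite h1.
rewrite -h3 -c1 => H.
rewrite -mulnA H.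
have -> : (n.+1 * (n.*2.+2 * 'C(n.*2.+1, n.+1)) = 2 * (n.+1) * (n.+1 * 'C(n.*2.+1, n.+1)))%N by lia.
rewrite -h2 -c0; lia.
Qed.

Import GRing.Theory.
Local Open Scope ring_scope.

Section S.
Variable b : nat -> int.
Hypothesis hb : forall i : nat, b i.+1 * (i + 3)%N%:R = 2 * (2 * i + 3)%N%:R * b i.

Let T n := Ltrans (-1 : int) 4 b n.
Let U n := \sum_(0 <= i < n.+1) ('C(n, i))%:R * (-1 : int) ^+ i * 4 ^+ (n - i) * b i.+1.
Let V n := \sum_(0 <= i < n.+1) ('C(n, i) * i)%:R * (-1 : int) ^+ i * 4 ^+ (n - i) * b i.
Let W n := \sum_(0 <= i < n.+1) ('C(n, i) * (n - i))%:R * (-1 : int) ^+ i * 4 ^+ (n - i) * b i.+1.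

Lemma stepA n : T n.+1 = 4 * T n - U n.
Proof.
rewrite /T /U /Ltrans big_nat_recl //=.
under eq_bigr => i _ do rewrite binS natrD !mulrDl subSS.
rewrite big_split /= [X in _ = X - _]mulr_sumr [X in _ = X - _]big_nat_recl //.
rewrite [X in _ + (X + _) = _]big_nat_recr //= (bin_small (ltnSn n)) !mul0r addr0.
rewrite -sumrN !addrA; congr (_ + _); first congr (_ + _).
- rewrite !bin0 !subn0 exprS; ring.
- apply: eq_big_nat => i /andP [_ hi].
  have -> : (n - i = (n - i.+1).+1)%N by lia.
  rewrite !exprS; ring.
- apply: eq_bigr => i _; rewrite exprS; ring.
Qed.

Lemma stepB n : W n + 4 * V n = 0.
Proof.
rewrite /W /V big_nat_recr //= subnn muln0 !mul0r addr0.
rewrite big_nat_recl //= muln0 !mul0r add0r mulr_sumr -big_split /=.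
rewrite big_nat big1 // => i /andP [_ hi].
rewrite [('C(n, i.+1) * _)%N]mulnC mul_bin_left mulnC.
have -> : (n - i = (n - i.+1).+1)%N by lia.
rewrite !exprS; ring.
Qed.

Lemma stepC n : (n + 3)%N%:R * U n = 6 * T n + 4 * V n + W n.
Proof.
rewrite /T /U /V /W /Ltrans !mulr_sumr -!big_split /=.
apply: eq_big_nat => i /andP [_ hi].
have key : (n + 3)%N%:R = (i + 3)%N%:R + (n - i)%:R :> int.
  by rewrite -natrD; congr (_%:R); lia.
have H := hb i.
rewrite key !natrM natrB //.
match goal with |- ?L = ?R =>
  suff E : L - R = 'C(n, i)%:R * (-1) ^+ i * 4 ^+ (n - i) *
     (b i.+1 * (i + 3)%N%:R - 2 * (2 * i + 3)%N%:R * b i) end.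
  by move: E; rewrite H subrr mulr0 => /eqP; rewrite subr_eq0 => /eqP.
rewrite ?natrD ?natrM ?natrB //; ring.
Qed.

Lemma Trec n : (n + 3)%N%:R * T n.+1 = 2 * (2 * n + 3)%N%:R * T n.
Proof.
rewrite stepA mulrBr stepC.
have := stepB n.
rewrite ?natrD ?natrM => E.
have -> : W n = - (4 * V n) by apply/eqP; rewrite -subr_eq0 opprK E.
ring.
Qed.
End S.

Lemma shift_rec (i : nat) : shift catalan_seq i.+1 * (i + 3)%N%:R =
  2 * (2 * i + 3)%N%:R * shift catalan_seq i.
Proof.
rewrite /shift /catalan_seq -!natrM; congr (_%:R).
have := catalan_rec i.+1; lia.
Qed.

Theorem theorem17 :
  forall n : nat,
    Ltrans (-1 : int) 4 (shift catalan_seq) n = shift catalan_seq n.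
Proof.
elim => [|n IH].
  by rewrite /Ltrans big_nat1 bin0 expr0 subnn expr0 !mul1r.
apply: (@mulfI _ ((n + 3)%N%:R)).
  by rewrite natz addn3.
by rewrite (@Trec (shift catalan_seq) shift_rec) IH [RHS]mulrC shift_rec.
Qed.
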